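(* Let $u\in\mathbb{S}^{d-1}$, $\theta>0$, $0<\tilde c,\zeta<1$, and $b=\frac{\tilde c\zeta\theta}{\sqrt d}\le 1$. Let $w_t\in\mathbb{S}^{d-1}$ with $\theta_t:=\theta(w_t,u)\le\frac53\theta$, and let $(x_t,y_t)\in\mathbb{S}^{d-1}\times\{-1,+1\}$ be any labeled example with $w_t\cdot x_t\in[\frac b2,b]$ (e.g. drawn from $D$ conditioned on this event). Define $w_{t+1}=w_t-2\,\mathbb{1}\{y_t\,w_t\cdot x_t<0\}(w_t\cdot x_t)x_t$ and $\theta_{t+1}=\theta(w_{t+1},u)$. Then $|\cos\theta_{t+1}-\cos\theta_t|\le\frac{16\tilde c\zeta\theta^2}{3\sqrt d}$.
   Context: $\mathbb{S}^{d-1}$ is the unit sphere in $\mathbb{R}^d$; $\theta(v_1,v_2)=\arccos(v_1\cdot v_2)$ for unit vectors. (The update preserves unit norm.) *)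

(* Defs.v *)
From HB Require Import structures.
From mathcomp Require Import all_boot all_order all_algebra.
From mathcomp Require Import all_classical all_reals all_analysis.
Set Implicit Arguments. Unset Strict Implicit. Unset Printing Implicit Defensive.
Import Order.TTheory GRing.Theory Num.Theory.
Local Open Scope ring_scope.

Definition dotv {R : realType} {d : nat} (u v : 'rV[R]_d) : R :=
  \sum_(i < d) u 0 i * v 0 i.

Definition normv {R : realType} {d : nat} (v : 'rV[R]_d) : R :=
  Num.sqrt (dotv v v).

Definition on_sphere {R : realType} {d : nat} (v : 'rV[R]_d) : Prop :=
  normv v = 1.

Definition angle {R : realType} {d : nat} (v1 v2 : 'rV[R]_d) : R :=
  acos (dotv v1 v2).

Definition update {R : realType} {d : nat} (w x : 'rV[R]_d) (y : R) : 'rV[R]_d :=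
  w - ((2 * (if y * dotv w x < 0 then 1 else 0) * dotv w x) *: x).

(* Main.v *)
Require Import Defs.
From HB Require Import structures.
From mathcomp Require Import all_boot all_order all_algebra.
From mathcomp Require Import all_classical all_reals all_analysis.
From mathcomp Require Import ring lra.
Import Order.TTheory GRing.Theory Num.Theory.
Local Open Scope ring_scope.

Section Helpers.
Local Open Scope classical_set_scope.
Lemma sin_le_id (R : realType) (s : R) : 0 <= s -> sin s <= s.
Proof.
rewrite le_eqVlt => /predU1P[<-|s0]; first by rewrite sin0.
have hd : forall t : R, is_derive t 1 (fun t => t - sin t) (1 - cos t).
  move=> t; exact: is_deriveB.
have hc : {within `[0, s], continuous (fun t : R => t - sin t)}.
  apply: continuous_subspaceT => t.
  apply: continuousB; first exact: cvg_id.
  exact: continuous_sin.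
have [c _ h] := @MVT R (fun t => t - sin t) (fun t => 1 - cos t) 0 s s0
  (fun t _ => hd t) hc.
move: h; rewrite sin0 !subr0 => h.
by rewrite -subr_ge0 h mulr_ge0 // ?subr_ge0 ?cos_le1 // ltW.
Qed.
End Helpers.

Section Vec.
Context {R : realType} {d : nat}.
Implicit Types (a b c : 'rV[R]_d).

Lemma dotvC a b : dotv a b = dotv b a.
Proof. by apply: eq_bigr => i _; rewrite mulrC. Qed.

Lemma dotvBl a b c : dotv (a - b) c = dotv a c - dotv b c.
Proof.
rewrite /dotv -sumrB; apply: eq_bigr => i _; rewrite !mxE; ring.
Qed.

Lemma dotvZl k a c : dotv (k *: a) c = k * dotv a c.
Proof.
rewrite /dotv mulr_sumr; apply: eq_bigr => i _; rewrite !mxE; ring.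
Qed.

Lemma dotvBr a b c : dotv c (a - b) = dotv c a - dotv c b.
Proof. by rewrite dotvC dotvBl !(dotvC c). Qed.

Lemma dotvZr k a c : dotv c (k *: a) = k * dotv c a.
Proof. by rewrite dotvC dotvZl dotvC. Qed.

Lemma dotv_ge0 a : 0 <= dotv a a.
Proof. by apply: sumr_ge0 => i _; rewrite -expr2 sqr_ge0. Qed.

Lemma sphere_dot a : on_sphere a -> dotv a a = 1.
Proof.
rewrite /on_sphere /normv => h.
by rewrite -(sqr_sqrtr (dotv_ge0 a)) h expr1n.
Qed.

Lemma dot_sq_le a x : dotv x x = 1 -> dotv a x ^+ 2 <= dotv a a.
Proof.
move=> hx.
have := dotv_ge0 (a - dotv a x *: x).
rewrite !dotvBl !dotvBr !dotvZl !dotvZr hx (dotvC x a).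
move=> h; rewrite -subr_ge0; move: h; congr (_ <= _); ring.
Qed.

Lemma sphere_dot_bd a b : on_sphere a -> on_sphere b -> -1 <= dotv a b <= 1.
Proof.
move=> /sphere_dot ha /sphere_dot hb.
have := @dot_sq_le a b hb; rewrite ha => h.
apply/andP; split; nra.
Qed.

Lemma sphere_d a : on_sphere a -> (0 < d)%N.
Proof.
move/sphere_dot; case: d a => // a; rewrite /dotv big_ord0 => h.
by move: (@oner_neq0 R); rewrite h eqxx.
Qed.
End Vec.

Theorem lemma6 (R : realType) (d : nat) (u w x : 'rV[R]_d) (y theta c zeta b : R)
  (hu : on_sphere u) (htheta : 0 < theta)
  (hc0 : 0 < c) (hc1 : c < 1) (hz0 : 0 < zeta) (hz1 : zeta < 1)
  (hb : b = c * zeta * theta / Num.sqrt (d%:R)) (hb1 : b <= 1)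
  (hw : on_sphere w) (hwu : angle w u <= 5 / 3 * theta)
  (hx : on_sphere x) (hy : y = 1 \/ y = -1)
  (hwx : b / 2 <= dotv w x <= b) :
  `| cos (angle (update w x y) u) - cos (angle w u) |
    <= 16 * c * zeta * theta ^+ 2 / (3 * Num.sqrt (d%:R)).
Proof.
have hd : (0 < d)%N := sphere_d w hw.
set sd := Num.sqrt (d%:R).
have sd1 : 1 <= sd.
  by rewrite /sd -{1}sqrtr1 ler_sqrt // ler1n.
have sdn : sd != 0 by rewrite gt_eqF // (lt_le_trans ltr01).
have hbsd : b * sd = c * zeta * theta by rewrite hb divfK.
have hb0 : 0 <= b by case/andP: hwx => h1 h2; lra.
have hbt : b <= theta.
  have h1 : b <= b * sd by rewrite ler_peMr.
  have h2 : c * zeta <= 1 by nra.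
  nra.
have -> : 16 * c * zeta * theta ^+ 2 / (3 * sd) = 16 / 3 * theta * b.
  by rewrite hb -/sd; field; rewrite sdn.
have ww := sphere_dot w hw; have uu := sphere_dot u hu; have xx := sphere_dot x hx.
set p := dotv w x; set q := dotv u x; set r := dotv w u.
have hr := sphere_dot_bd w u hw hu.
rewrite /angle -/r.
set s := (if y * p < 0 then (1:R) else 0).
have hs : s = 0 \/ s = 1 by rewrite /s; case: ifP; auto.
have hupd : dotv (update w x y) u = r - 2 * s * p * q.
  by rewrite /update -/p -/s dotvBl dotvZl (dotvC x u).
have hupd2 : on_sphere (update w x y).
  rewrite /on_sphere /normv.
  suff -> : dotv (update w x y) (update w x y) = 1 by rewrite sqrtr1.
  rewrite /update -/p -/s !dotvBl !dotvBr !dotvZl !dotvZr ww xx (dotvC x w) -/p.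
  by case: hs => ->; ring.
have hr' := sphere_dot_bd _ u hupd2 hu.
rewrite acosK ?in_itv //= acosK ?in_itv //= hupd.
set t := acos r.
have t0 : 0 <= t by apply: acos_ge0.
have tpi : t <= pi by apply: acos_lepi.
have ct : cos t = r by rewrite /t acosK // in_itv.
have hqp : (q - p) ^+ 2 <= t ^+ 2.
  have h1 : (q - p) ^+ 2 <= 2 - 2 * r.
    have := @dot_sq_le R d (u - w) x xx.
    rewrite !dotvBl !dotvBr -/p -/q uu ww (dotvC u w) -/r.
    move=> h; apply: (le_trans h); lra.
  have h2 : cos t = 1 - 2 * sin (t / 2) ^+ 2.
    rewrite {1}(splitr t) cosD -!expr2 cos2sin2; ring.
  have h3 : 0 <= sin (t / 2).
    apply: sin_ge0_pi; apply/andP; split; first by rewrite divr_ge0.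
    have := pi_gt0 R; lra.
  have h4 : sin (t / 2) <= t / 2 by apply: sin_le_id; rewrite divr_ge0.
  rewrite -ct in h1; nra.
case/andP: hwx => hp1 hp2; rewrite -/p in hp1 hp2.
have hq1 : q <= p + t.
  case: (lerP q (p + t)) => // h.
  have : 0 < (q - p - t) * (q - p + t) by apply: mulr_gt0; lra.
  nra.
have hq2 : - (p + t) <= q.
  case: (lerP (- (p + t)) q) => // h.
  have : 0 < (p - q - t) * (p - q + t) by apply: mulr_gt0; lra.
  nra.
have hta : t <= 5 / 3 * theta by [].
case: hs => ->.
  rewrite !(mulr0, mul0r) subr0 subrr normr0; nra.
rewrite mulr1 addrAC subrr add0r normrN normrM ger0_norm; last nra.
have hqa : `|q| <= b + 5 / 3 * theta.
  rewrite ler_norml; apply/andP; split; lra.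
have hn := normr_ge0 q.
have hp0 : 0 <= p by lra.
have e1 : p * `|q| <= b * (b + 5 / 3 * theta).
  apply: ler_pM => //.
nra.
Qed.
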